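(* Let $B$ be any group and $p\ge 2$ an integer. If $w\in (B\wr C_p)'$, then $w$ can be written as the wreath recursion $$w=\Big(r_1,r_2,\dots,r_{p-1},\; r_1^{-1}\cdots r_{p-1}^{-1}\prod_{j=1}^{k}[f_j,g_j]\Big)$$ for some $r_1,\dots,r_{p-1},f_j,g_j\in B$ and some $k\le cw(B)$.
   Context: $C_p$ is the cyclic group of order $p$ acting on $\{1,\dots,p\}$ by $\sigma=(1,2,\dots,p)$. Elements of $B\wr C_p=B^p\rtimes C_p$ are written $(b_1,\dots,b_p)\tau$, with multiplication $(g_1,\dots,g_p)\tau\cdot(h_1,\dots,h_p)\rho=(g_1h_{\tau(1)},\dots,g_ph_{\tau(p)})\tau\rho$; $(b_1,\dots,b_p)$ denotes an element with trivial $C_p$-part. The commutator is $[a,b]=aba^{-1}b^{-1}$. The commutator length of $g\in G'$ is the least $n$ such that $g$ is a product of $n$ commutators; the commutator width $cw(G)$ is the maximum of commutator lengths over elements of $G'$. *)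

(* Defs.v *)
(* B is an arbitrary (possibly infinite) group, given as a
   record of carrier, operations and group axioms. *)
From mathcomp Require Import all_boot.
Set Implicit Arguments. Unset Strict Implicit. Unset Printing Implicit Defensive.

Record Grp := {
  carrier :> Type;
  gmul : carrier -> carrier -> carrier;
  gone : carrier;
  ginv : carrier -> carrier;
  gmulA : forall x y z, gmul x (gmul y z) = gmul (gmul x y) z;
  gmul1 : forall x, gmul gone x = x;
  gmulV : forall x, gmul (ginv x) x = gone
}.

Definition comm_gen (T : Type) (m : T -> T -> T) (i : T -> T) (a b : T) : T :=
  m a (m b (m (i a) (i b))).

Definition prod_comm_gen (T : Type) (m : T -> T -> T) (i : T -> T) (e : T)
  (l : seq (T * T)) : T :=
  foldr (fun ab acc => m (comm_gen m i ab.1 ab.2) acc) e l.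

Definition prod_comm (B : Grp) (l : seq (B * B)) : B :=
  prod_comm_gen (@gmul B) (@ginv B) (@gone B) l.

Definition in_derived (B : Grp) (g : B) : Prop :=
  exists l : seq (B * B), g = prod_comm l.

Definition cw_le (B : Grp) (n : nat) : Prop :=
  forall g : B, in_derived g ->
    exists l : seq (B * B), size l <= n /\ g = prod_comm l.

(* k <= cw(B)  (cw(B) possibly infinite): k is below every upper bound *)
Definition le_cw (B : Grp) (k : nat) : Prop :=
  forall n, cw_le B n -> k <= n.

(* ---- the wreath product B wr C_p ----
   indices 1..p are represented by 'I_p (0..p-1); sigma = (1,2,...,p) is
   i |-> i+1 mod p; the C_p-part sigma^t is stored as t : 'I_p. *)
Section Wreath.
Variables (B : Grp) (p : nat).

Lemma ord_pos (i : 'I_p) : 0 < p.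
Proof. exact: leq_ltn_trans (leq0n i) (ltn_ord i). Qed.

Definition rotI (t : nat) (i : 'I_p) : 'I_p :=
  Ordinal (ltn_pmod (i + t) (ord_pos i)).

Record wr := Wr { wbase : {ffun 'I_p -> B}; wtop : 'I_p }.

(* (g)tau * (h)rho = (g_i h_{tau(i)}) tau rho *)
Definition wr_mul (x y : wr) : wr :=
  Wr [ffun i => gmul (wbase x i) (wbase y (rotI (wtop x) i))]
     (rotI (wtop y) (wtop x)).

Definition wr_inv (x : wr) : wr :=
  Wr [ffun j => ginv (wbase x (rotI (p - wtop x) j))]
     (Ordinal (ltn_pmod (p - wtop x) (ord_pos (wtop x)))).

End Wreath.

Definition wr_one (B : Grp) (p : nat) (Hp : 0 < p) : wr B p :=
  Wr [ffun => gone B] (Ordinal Hp).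

Definition in_derived_wr (B : Grp) (p : nat) (Hp : 0 < p) (w : wr B p) : Prop :=
  exists l : seq (wr B p * wr B p),
    w = prod_comm_gen (@wr_mul B p) (@wr_inv B p) (wr_one B Hp) l.

(* r_1^{-1} r_2^{-1} ... r_{m}^{-1}, with r indexed from 0 *)
Definition prod_inv (B : Grp) (r : nat -> B) (m : nat) : B :=
  foldr (fun i acc => gmul (ginv (r i)) acc) (gone B) (iota 0 m).

(* Main.v *)
Require Import Defs.
From mathcomp Require Import all_boot.
From Stdlib Require Import Classical.
From mathcomp Require Import zify.
Set Implicit Arguments. Unset Strict Implicit.

Section G.
Variable B : Grp.
Local Notation "x ⊙ y" := (gmul x y) (at level 40, left associativity).
Local Notation e := (gone B).
Local Notation "x ^-1" := (ginv x).
Implicit Types a b c x y z g : B.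

Lemma mulKg a x : a^-1 ⊙ (a ⊙ x) = x.
Proof. by rewrite gmulA gmulV gmul1. Qed.
Lemma gcancel a x y : a ⊙ x = a ⊙ y -> x = y.
Proof. by move=> H; rewrite -(mulKg a x) H mulKg. Qed.
Lemma gmulVr x : x ⊙ x^-1 = e.
Proof. by rewrite -{1}(gmul1 (x ⊙ x^-1)) -{1}(gmulV (x^-1)) -gmulA (mulKg x) (gmulV (x^-1)). Qed.
Lemma gmul1r x : x ⊙ e = x.
Proof. by rewrite -(gmulV x) gmulA gmulVr gmul1. Qed.
Lemma mulVKg a x : a ⊙ (a^-1 ⊙ x) = x.
Proof. by rewrite gmulA gmulVr gmul1. Qed.
Lemma mulgKV a x : (a ⊙ x) ⊙ x^-1 = a.
Proof. by rewrite -gmulA gmulVr gmul1r. Qed.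
Lemma mulgVK a x : (a ⊙ x^-1) ⊙ x = a.
Proof. by rewrite -gmulA gmulV gmul1r. Qed.
Lemma ginvK x : (x^-1)^-1 = x.
Proof. apply: (@gcancel (x^-1)); by rewrite gmulVr gmulV. Qed.
Lemma ginvM x y : (x ⊙ y)^-1 = y^-1 ⊙ x^-1.
Proof. apply: (@gcancel (x ⊙ y)); by rewrite gmulVr -gmulA mulVKg gmulVr. Qed.
Lemma ginv1 : e^-1 = e.
Proof. by rewrite -{2}(gmulV e) gmul1r. Qed.

Ltac gn := rewrite ?ginvM ?ginvK ?ginv1 ?gmulA ?mulgKV ?mulgVK ?gmulV ?gmulVr ?gmul1 ?gmul1r ?gmulA ?mulgKV ?mulgVK ?gmul1 ?gmul1r.
Definition D g := exists l : seq (B * B)%type, g = prod_comm l.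

Lemma prod_comm_cat (l1 l2 : seq (B * B)%type) : prod_comm (l1 ++ l2) = prod_comm l1 ⊙ prod_comm l2.
Proof. elim: l1 => [|a l IH] /=; first by rewrite gmul1. by rewrite /prod_comm /= -/(@prod_comm B _) IH gmulA. Qed.

Lemma D1 : D e. Proof. by exists [::]. Qed.
Lemma DM a b : D a -> D b -> D (a ⊙ b).
Proof. by move=> [l1 ->] [l2 ->]; exists (l1 ++ l2); rewrite prod_comm_cat. Qed.
Lemma Dcomm a b : D (a ⊙ (b ⊙ (a^-1 ⊙ b^-1))).
Proof. exists [:: (a, b)]; by rewrite /prod_comm /= gmul1r. Qed.
Lemma DV a : D a -> D (a^-1).
Proof.
move=> [l ->]; elim: l => [|[x y] l IH]; first by rewrite ginv1; apply: D1.
rewrite /prod_comm /= -/(@prod_comm B _) ginvM; apply: DM => //.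
rewrite /comm_gen /= !ginvM !ginvK -!gmulA; exact: Dcomm.
Qed.
Lemma DJ g a : D a -> D (g ⊙ (a ⊙ g^-1)).
Proof.
move=> [l ->]; elim: l => [|[x y] l IH]; first by rewrite gmul1 gmulVr; apply: D1.
rewrite /prod_comm /= -/(@prod_comm B _).
have -> : g ⊙ ((comm_gen (@gmul B) (@ginv B) x y ⊙ prod_comm l) ⊙ g^-1) =
  (g ⊙ (comm_gen (@gmul B) (@ginv B) x y ⊙ g^-1)) ⊙ (g ⊙ (prod_comm l ⊙ g^-1)).
  by gn.
apply: DM => //.
have -> : g ⊙ (comm_gen (@gmul B) (@ginv B) x y ⊙ g^-1) =
  (g ⊙ (x ⊙ g^-1)) ⊙ ((g ⊙ (y ⊙ g^-1)) ⊙ ((g ⊙ (x ⊙ g^-1))^-1 ⊙ (g ⊙ (y ⊙ g^-1))^-1)).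
  by rewrite /comm_gen; gn.
exact: Dcomm.
Qed.

Definition cong a b := D (a ⊙ b^-1).
Lemma cong_refl a : cong a a. Proof. rewrite /cong gmulVr; exact: D1. Qed.
Lemma cong_sym a b : cong a b -> cong b a.
Proof. by move=> /DV; rewrite /cong ginvM ginvK. Qed.
Lemma cong_trans a b c : cong a b -> cong b c -> cong a c.
Proof. move=> H1 H2; have := DM H1 H2. by rewrite -gmulA mulKg. Qed.
Lemma cong_mul a a' b b' : cong a a' -> cong b b' -> cong (a ⊙ b) (a' ⊙ b').
Proof.
move=> H1 H2; have := DM (DJ a H2) H1; rewrite /cong ginvM.
by gn.
Qed.
Lemma cong_C a b : cong (a ⊙ b) (b ⊙ a).
Proof. rewrite /cong ginvM -gmulA; exact: Dcomm. Qed.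
Lemma cong_inv a b : cong a b -> cong (a^-1) (b^-1).
Proof.
move=> H; have := DJ (a^-1) (DV H); rewrite /cong ginvM !ginvK.
by gn.
Qed.
Lemma cong1 a : cong a e <-> D a.
Proof. by rewrite /cong ginv1 gmul1r. Qed.
Lemma congD a : D a -> cong a e. Proof. by move/cong1. Qed.
Definition P (s : seq B) := foldr (@gmul B) e s.
Lemma P_cat s1 s2 : P (s1 ++ s2) = P s1 ⊙ P s2.
Proof. elim: s1 => [|x s IH] /=; first by rewrite gmul1. by rewrite IH gmulA. Qed.
Lemma cong_rot n s : cong (P (rot n s)) (P s).
Proof. have -> : rot n s = drop n s ++ take n s by []. by rewrite P_cat -{3}(cat_take_drop n s) P_cat; apply: cong_C. Qed.

Lemma cong_perm (I : eqType) (f : I -> B) (s t : seq I) :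
  perm_eq s t -> cong (P (map f s)) (P (map f t)).
Proof.
elim: s t => [|x s IH] t.
  by move=> H; have := perm_size H; case: t H => // _ _; apply: cong_refl.
rewrite perm_sym => /perm_consP [i [u [Hr Hu]]].
apply: cong_sym; apply: cong_trans (cong_sym (cong_rot i _)) _.
rewrite -map_rot Hr /=; apply: cong_mul; first exact: cong_refl.
by apply: cong_sym; apply: IH; rewrite perm_sym.
Qed.

Lemma cong_mapM (I : Type) (f g : I -> B) (s : seq I) :
  cong (P (map (fun i => f i ⊙ g i) s)) (P (map f s) ⊙ P (map g s)).
Proof.
elim: s => [|x s IH] /=; first by rewrite gmul1; apply: cong_refl.
apply: cong_trans (cong_mul (cong_refl _) IH) _.
rewrite -!gmulA; apply: cong_mul; first exact: cong_refl.
rewrite !gmulA; apply: cong_mul; [exact: cong_C | exact: cong_refl].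
Qed.

Lemma cong_mapV (I : Type) (f : I -> B) (s : seq I) :
  cong (P (map (fun i => (f i)^-1) s)) ((P (map f s))^-1).
Proof.
elim: s => [|x s IH] /=; first by rewrite ginv1; apply: cong_refl.
apply: cong_trans (cong_mul (cong_refl _) IH) _.
rewrite ginvM; exact: cong_C.
Qed.

Lemma P_ones (I : Type) (s : seq I) : P (map (fun _ => e) s) = e.
Proof. by elim: s => //= x s ->; rewrite gmul1. Qed.
Variable p : nat.
Local Notation E := (enum 'I_p).
Definition S (x : wr B p) := P (map (wbase x) E).

Lemma rotI_inj t : injective (@rotI p t).
Proof.
move=> i j /(congr1 val) /=.
move/eqP; rewrite eqn_modDr => /eqP.
by rewrite !modn_small // => /val_inj.
Qed.

Lemma perm_rotI t : perm_eq (map (@rotI p t) E) E.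
Proof.
have hu : uniq (map (@rotI p t) E) by rewrite map_inj_uniq ?enum_uniq //; apply: rotI_inj.
apply: uniq_perm => //; first exact: enum_uniq.
have Hs : size E <= size (map (@rotI p t) E) by rewrite size_map.
have Hsub : {subset map (@rotI p t) E <= E} by move=> x; rewrite mem_enum.
exact: (uniq_min_size hu Hsub Hs).2.
Qed.

Lemma S_mul (x y : wr B p) : cong (S (wr_mul x y)) (S x ⊙ S y).
Proof.
rewrite /S /wr_mul /=.
rewrite (eq_map (g := fun i => wbase x i ⊙ wbase y (rotI (wtop x) i))); last by move=> i; rewrite ffunE.
apply: cong_trans (cong_mapM _ _ _) _; apply: cong_mul; first exact: cong_refl.
move: (cong_perm (wbase y) (perm_rotI (wtop x))); rewrite -map_comp; exact.
Qed.

Lemma S_inv (x : wr B p) : cong (S (wr_inv x)) ((S x)^-1).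
Proof.
rewrite /S /wr_inv /=.
rewrite (eq_map (g := fun i => (wbase x (rotI (p - wtop x) i))^-1)); last by move=> i; rewrite ffunE.
apply: cong_trans (cong_mapV _ _) _; apply: cong_inv.
move: (cong_perm (wbase x) (perm_rotI (p - wtop x))); rewrite -map_comp; exact.
Qed.

Lemma top_mul (x y : wr B p) : nat_of_ord (wtop (wr_mul x y)) = (wtop x + wtop y) %% p.
Proof. by rewrite /= addnC. Qed.
Lemma top_inv (x : wr B p) : nat_of_ord (wtop (wr_inv x)) = (p - wtop x) %% p.
Proof. by []. Qed.

Lemma derived_wr (Hp : 0 < p) (l : seq (wr B p * wr B p)%type) :
  let w := prod_comm_gen (@wr_mul B p) (@wr_inv B p) (wr_one B Hp) l in
  nat_of_ord (wtop w) = 0 /\ D (S w).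
Proof.
elim: l => [|[a b] l IH] /=.
  split => //; rewrite /S /= (eq_map (g := fun _ => e)); last by move=> i; rewrite ffunE.
  by rewrite P_ones; apply: D1.
move: IH => [IH1 IH2]; set w' := prod_comm_gen _ _ _ l in IH1 IH2 *.
split.
  rewrite IH1 addn0.
  rewrite ?modnDmr ?modnDml ?modn_mod ?modnDmr ?modnDml ?modn_mod ?modnDmr ?modnDml ?modn_mod ?modnDmr.
  have ha := ltn_ord (wtop a); have hb := ltn_ord (wtop b).
rewrite addnA modnDmr -addnA.   have -> : wtop a + (wtop b + (p - wtop a + (p - wtop b))) = p * 2 by lia.
  by rewrite modnMr.
apply/cong1; apply: cong_trans (S_mul _ _) _.
rewrite -(gmul1r e); apply: cong_mul; last by apply/cong1.
rewrite /comm_gen.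
apply: cong_trans (S_mul _ _) _.
apply: cong_trans (cong_mul (cong_refl _) (S_mul _ _)) _.
apply: cong_trans (cong_mul (cong_refl _) (cong_mul (cong_refl _) (S_mul _ _))) _.
apply: cong_trans (cong_mul (cong_refl _) (cong_mul (cong_refl _) (cong_mul (S_inv _) (S_inv _)))) _.
apply/cong1; exact: Dcomm.
Qed.
End G.

Lemma min_ex (Q : nat -> Prop) n : Q n -> exists m, Q m /\ forall k, Q k -> m <= k.
Proof.
elim: n {-2}n (leqnn n) => [|N IH] n Hn HQ.
  exists n; split => // k _; by move: Hn; rewrite leqn0 => /eqP ->.
destruct (classic (exists k, k < n /\ Q k)) as [[k [Hk HQk]]|Hno].
  apply: (IH k) => //; move: Hk Hn; lia.
exists n; split => // k Hk; rewrite leqNgt; apply/negP => Hlt; apply: Hno; by exists k.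
Qed.

Lemma le_cw_exists (B : Grp) (c : B) : D c -> exists fg, le_cw B (size fg) /\ c = prod_comm fg.
Proof.
move=> Hc.
destruct (classic (exists n, cw_le B n)) as [[n Hn]|Hno].
  have [m [Hm Hmin]] := min_ex Hn.
  have [l [Hl ->]] := Hm c Hc.
  exists l; split => // k Hk; exact: leq_trans Hl (Hmin k Hk).
have [l ->] := Hc; exists l; split => // k Hk; exfalso; apply: Hno; by exists k.
Qed.

Theorem mainTheorem2 (B : Grp) (p : nat) (Hp : 2 <= p) (w : wr B p) :
  in_derived_wr (leq_trans (isT : 0 < 2) Hp) w ->
  exists (r : nat -> B) (fg : seq (B * B)),
    le_cw B (size fg) /\
    nat_of_ord (wtop w) = 0 /\
    (forall i : 'I_p, i < p.-1 -> wbase w i = r (nat_of_ord i)) /\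
    (forall i : 'I_p, nat_of_ord i = p.-1 ->
       wbase w i = gmul (prod_inv r p.-1) (prod_comm fg)).
Proof.
move=> [l Hl].
have [Htop HS] := derived_wr (leq_trans (isT : 0 < 2) Hp) l.
rewrite -Hl in Htop HS.
pose r (n : nat) : B := if @insub _ (fun k => k < p) 'I_p n is Some i then wbase w i else gone B.
have Hr : forall i : 'I_p, r (nat_of_ord i) = wbase w i.
  by move=> i; rewrite /r valK.
have HSw : S w = gmul (P (map r (iota 0 p.-1))) (gmul (r p.-1) (gone B)).
  rewrite /S -(eq_map Hr) map_comp val_enum_ord.
  have -> : iota 0 p = iota 0 p.-1 ++ [:: p.-1].
    by rewrite -(iotaD 0 p.-1 1) addn1 prednK //; move: (Hp); lia.
  by rewrite map_cat P_cat.
set X := prod_inv r p.-1.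
have HX : X = P (map (fun i => ginv (r i)) (iota 0 p.-1)) by rewrite /X /prod_inv /P foldr_map.
have Hp1 : p.-1 < p by move: (Hp); lia.
set i0 : 'I_p := Ordinal Hp1.
have Hc : D (gmul (ginv X) (wbase w i0)).
  apply/cong1.
  apply: (cong_trans (b := gmul (P (map r (iota 0 p.-1))) (wbase w i0))).
    apply: cong_mul; last exact: cong_refl.
    rewrite HX; have := cong_inv (cong_mapV r (iota 0 p.-1)); by rewrite ginvK.
  apply/cong1; rewrite -(Hr i0) /=; move: HS; by rewrite HSw gmul1r.
have [fg [Hfg Heq]] := le_cw_exists Hc.
exists r, fg; split => //; split => //; split.
  by move=> i _; rewrite Hr.
move=> i Hi; have -> : i = i0 by apply: val_inj.
by rewrite -Heq mulVKg.
Qed.
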